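(* Let $\alpha>0$, $A\ge0$, $B>0$, $t>0$, and let $P_n(x,t)=x^n+\mathsf{p}_1(n,t)x^{n-1}+\cdots$ be the monic polynomials orthogonal on $[0,\infty)$ w.r.t. $w(x,t)=x^\alpha e^{-x}(A+B\theta(x-t))$, with norms $h_n(t)$. Let $r_n(t)=Bt^\alpha e^{-t}P_n(t,t)P_{n-1}(t,t)/h_{n-1}(t)$. Then for $n\ge1$ $$\frac{d}{dt}\mathsf{p}_1(n,t)=r_n(t).$$
   Context: $\theta$ is the Heaviside function ($1$ for $x>0$, $0$ otherwise); $P_n(t,t)$ is $P_n(x,t)$ at $x=t$. *)

(* Defs.v *)
From HB Require Import structures.
From mathcomp Require Import all_boot all_order all_algebra.
From mathcomp Require Import all_classical all_reals all_analysis.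
Set Implicit Arguments. Unset Strict Implicit. Unset Printing Implicit Defensive.
Import Order.TTheory GRing.Theory Num.Theory.
Import numFieldNormedType.Exports.
Local Open Scope classical_set_scope.
Local Open Scope ring_scope.

Definition heaviside (R : realType) (x : R) : R := if 0 < x then 1 else 0.

Definition weight (R : realType) (alpha A B t x : R) : R :=
  x `^ alpha * expR (- x) * (A + B * heaviside (x - t)).

Definition ip (R : realType) (alpha A B t : R) (f g : {poly R}) : R :=
  Rintegral lebesgue_measure `[0%R, +oo[%classic
    (fun x => f.[x] * g.[x] * weight alpha A B t x).

Definition hnorm (R : realType) (alpha A B t : R) (p : {poly R}) : R :=
  ip alpha A B t p p.

Definition p1 (R : realType) (P : nat -> R -> {poly R}) (n : nat) (t : R) : R :=
  (P n t)`_n.-1.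

Definition rn (R : realType) (alpha A B : R) (P : nat -> R -> {poly R})
  (n : nat) (t : R) : R :=
  B * t `^ alpha * expR (- t) * (P n t).[t] * (P n.-1 t).[t]
    / hnorm alpha A B t (P n.-1 t).

(* Main.v *)
Require Import Defs.
From HB Require Import structures.
From mathcomp Require Import all_boot all_order all_algebra.
From mathcomp Require Import all_classical all_reals all_analysis.
From mathcomp Require Import measurable_realfun.
From mathcomp Require Import ring lra.
Import Order.TTheory GRing.Theory Num.Theory.
Import numFieldNormedType.Exports.
Local Open Scope classical_set_scope.
Local Open Scope ring_scope.
Section Analysis.
Context (R : realType) (alpha A B : R).
Hypotheses (ha : 0 < alpha) (hA : 0 <= A) (hB : 0 < B).
Notation mu := (@lebesgue_measure R).
Definition DD : set R := `[0, +oo[%classic.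
Definition gg (x : R) : R := x `^ alpha * expR (- x).

Lemma mDD : measurable DD. Proof. exact: measurable_itv. Qed.

Lemma poly_growth (f : {poly R}) : exists C : R, exists m : nat,
  0 <= C /\ forall x, 0 <= x -> `|f.[x]| <= C * (1 + x) ^+ m.
Proof.
elim/poly_ind: f => [|p c [C [m [C0 HC]]]].
  by exists 0, 0%N; split => // x _; rewrite horner0 normr0 mul0r.
exists (C + `|c|), m.+1; split; first by rewrite addr_ge0.
move=> x x0; rewrite hornerMXaddC.
apply: (le_trans (ler_normD _ _)).
rewrite normrM (ger0_norm x0) exprS.
have h1 : 1 <= (1 + x) ^+ m by rewrite exprn_ege1 // lerDl.
have h2 := HC x x0.
set u := `|p.[x]| in h2 *; set v := (1 + x) ^+ m in h1 h2 *.
have u0 : 0 <= u by rewrite normr_ge0.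
have c0 : 0 <= `|c| by rewrite normr_ge0.
have e1 : u * x <= C * v * x by rewrite ler_wpM2r.
have e2 : `|c| <= `|c| * ((1 + x) * v).
  have e3 : 1 <= (1 + x) * v by nra.
  by rewrite -[X in X <= _]mulr1 ler_wpM2l.
nra.
Qed.

Lemma pow_le_fact_exp (y : R) (K : nat) : 0 <= y -> y ^+ K <= K`!%:R * expR y.
Proof.
move=> y0; case: K => [|k].
  by rewrite expr0 fact0 mul1r; apply: le_trans (expR_ge1Dx y); rewrite lerDl.
have := expR_ge1Dxn k y0.
have F0 : 0 < (k.+1)`!%:R :> R by rewrite ltr0n fact_gt0.
move=> H.
have : y ^+ k.+1 / (k.+1)`!%:R <= expR y.
  by apply: le_trans H; rewrite lerDr.
by rewrite ler_pdivrMr // mulrC.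
Qed.

Lemma powR_le_pow : exists N : nat, forall x : R, 0 <= x ->
  x `^ alpha <= (1 + x) ^+ N.
Proof.
exists (Num.trunc alpha).+1 => x x0.
rewrite -powR_mulrn; last by rewrite addr_ge0.
apply: (@le_trans _ _ ((1 + x) `^ alpha)).
  apply: ge0_ler_powR; first exact: ltW.
  - by rewrite nnegrE.
  - by rewrite nnegrE addr_ge0.
  - by rewrite lerDr.
by apply: ler_powR; [rewrite lerDl | exact: ltW (truncnS_gt alpha)].
Qed.


Lemma poly_powR_bound (f : {poly R}) : exists M : R, forall x, 0 <= x ->
  `|f.[x] * x `^ alpha * expR (- x / 2)| <= M.
Proof.
have [C [m [C0 HC]]] := poly_growth f.
have [N HN] := powR_le_pow.
set K := (m + N)%N.
exists (C * (4 ^+ K * (K`!%:R * expR 1))) => x x0.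
rewrite !normrM (ger0_norm (powR_ge0 _ _)) (ger0_norm (expR_ge0 _)).
have p0 : 0 <= x `^ alpha := powR_ge0 _ _.
have e0 : 0 <= expR (- x / 2) := expR_ge0 _.
have y0 : 0 <= (1 + x) / 4 by rewrite divr_ge0 // addr_ge0.
have hy := pow_le_fact_exp ((1 + x) / 4) K y0.
have E1 : (1 + x) ^+ K = 4 ^+ K * ((1 + x) / 4) ^+ K.
  rewrite exprMn exprVn mulrCA mulfV ?mulr1 //.
have E2 : expR ((1 + x) / 4) * expR (- x / 2) <= expR 1.
  by rewrite -expRD ler_expR; lra.
have A1 : `|f.[x]| * x `^ alpha <= C * (1 + x) ^+ K.
  rewrite /K exprD mulrA.
  by apply: ler_pM => //; first [exact: HC | exact: HN].
apply: le_trans (ler_wpM2r e0 A1) _.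
rewrite -mulrA ler_wpM2l // E1 -mulrA ler_wpM2l ?exprn_ge0 //.
apply: le_trans (ler_wpM2r e0 hy) _.
rewrite -mulrA ler_wpM2l //.
Qed.


Lemma cont_exp_half : continuous (fun x : R => expR (- x / 2)).
Proof.
move=> y.
apply: (@continuous_comp _ _ _ (fun x : R => - x / 2) expR); last exact: continuous_expR.
apply: (@continuousM R R (fun x : R => - x) (fun=> 2^-1)).
  exact: opp_continuous.
exact: cst_continuous.
Qed.

Lemma meas_horner (f : {poly R}) : measurable_fun [set: R] (fun x : R => f.[x]).
Proof. apply: continuous_measurable_fun; exact: continuous_horner. Qed.

Lemma int_pg (f : {poly R}) :
  mu.-integrable DD (EFin \o (fun x => f.[x] * gg x)).
Proof.
have [M HM] := poly_powR_bound f.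
have hexp : mu.-integrable DD (EFin \o exponential_pdf (2^-1 : R)).
  apply: integrableS (integrable_exponential_pdf _) => //; first exact: mDD.
  all: try by rewrite invr_gt0.

have mh : measurable_fun DD (fun x => 2 * (f.[x] * x `^ alpha * expR (- x / 2))).
  apply: measurable_funTS; apply: measurable_funM => //.
  apply: measurable_funM; first apply: measurable_funM.
  - exact: meas_horner.
  - exact: measurable_powR.
  - exact: continuous_measurable_fun cont_exp_half.
have bh : [bounded 2 * (f.[x] * x `^ alpha * expR (- x / 2)) | x in DD].
  rewrite /bounded_near; exists (2 * M); split; first exact: num_real.
  move=> K MK x Dx /=.
  have x0 : 0 <= x by move: Dx; rewrite /DD /= in_itv /= andbT.

  rewrite normrM ger0_norm //.
  apply: le_trans (ler_wpM2l _ (HM x x0)) _ => //.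
  exact: ltW.
have := @integrableMr _ _ _ mu DD mDD _ _ mh bh hexp.
move=> Hi; apply: eq_integrable Hi; first exact: measurable_itv.
move=> x; rewrite inE /DD /= in_itv /= andbT => x0.
rewrite /= exponential_pdfE // /gg.
have -> : expR (- x) = expR (- x / 2) * expR (- 2^-1 * x).
  by rewrite -expRD; congr expR; field.
by congr EFin; field.
Qed.



Lemma heav_ge0 (y : R) : 0 <= heaviside y.
Proof. by rewrite /heaviside; case: ifP. Qed.

Lemma heav_le1 (y : R) : heaviside y <= 1.
Proof. by rewrite /heaviside; case: ifP. Qed.

Lemma weightE t x : weight alpha A B t x = gg x * (A + B * heaviside (x - t)).
Proof. by []. Qed.

Lemma gg_ge0 x : 0 <= gg x.
Proof. by rewrite /gg mulr_ge0 ?powR_ge0 ?expR_ge0. Qed.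

Lemma weight_ge0 t x : 0 <= weight alpha A B t x.
Proof.
rewrite weightE mulr_ge0 ?gg_ge0 // addr_ge0 // mulr_ge0 ?heav_ge0 //.
exact: ltW.
Qed.

Lemma meas_heav t : measurable_fun [set: R] (fun x : R => heaviside (x - t)).
Proof.
rewrite (_ : (fun x : R => heaviside (x - t)) = \1_`]t, +oo[); last first.
  apply/funext => x; rewrite /heaviside indicE mem_setE in_itv /= andbT subr_gt0.
  by case: ifP.
exact: measurable_indic.
Qed.

Lemma int_Phi t (f : {poly R}) :
  mu.-integrable DD (EFin \o (fun x => f.[x] * weight alpha A B t x)).
Proof.
have mh : measurable_fun DD (fun x : R => A + B * heaviside (x - t)).
  apply: measurable_funTS; apply: measurable_funD => //.
  by apply: measurable_funM => //; exact: meas_heav.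
have bh : [bounded A + B * heaviside (x - t) | x in DD].
  rewrite /bounded_near; exists (A + B); split; first exact: num_real.
  move=> K MK x Dx /=; apply: le_trans (ltW MK).
  rewrite ger0_norm; last by rewrite addr_ge0 // mulr_ge0 ?heav_ge0 // ltW.
  by rewrite lerD2l ler_piMr ?heav_le1 // ltW.
have := @integrableMl _ _ _ mu DD mDD _ _ (int_pg f) mh bh.
move=> Hi; apply: eq_integrable Hi; first exact: measurable_itv.
move=> x _ /=; rewrite -EFinM weightE; congr EFin; exact: esym (mulrA _ _ _).
Qed.

Definition Phi t (f : {poly R}) : R :=
  \int[mu]_(x in DD) (f.[x] * weight alpha A B t x).

Lemma ipE t (f g : {poly R}) : ip alpha A B t f g = Phi t (f * g).
Proof. by rewrite /ip /Phi; apply: eq_Rintegral => x _; rewrite hornerM. Qed.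

Lemma PhiD t (f g : {poly R}) : Phi t (f + g) = Phi t f + Phi t g.
Proof.
rewrite /Phi -RintegralD //; first last.
- exact: int_Phi.
- exact: int_Phi.
- exact: measurable_itv.
by apply: eq_Rintegral => x _; rewrite hornerD mulrDl.
Qed.

Lemma PhiZ t a (f : {poly R}) : Phi t (a *: f) = a * Phi t f.
Proof.
rewrite /Phi -RintegralZl //; first last.
- exact: int_Phi.
- exact: measurable_itv.
by apply: eq_Rintegral => x _; rewrite hornerZ; exact: esym (mulrA _ _ _).
Qed.

Lemma Phi0 t : Phi t 0 = 0.
Proof. by rewrite -(scale0r (0 : {poly R})) PhiZ mul0r. Qed.

Lemma PhiB t (f g : {poly R}) : Phi t (f - g) = Phi t f - Phi t g.
Proof.
by rewrite PhiD -scaleN1r PhiZ mulN1r.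
Qed.

Lemma Phi_ge0 t (f : {poly R}) : (forall x, 0 <= x -> 0 <= f.[x]) -> 0 <= Phi t f.
Proof.
move=> H; apply: Rintegral_ge0 => x; rewrite /DD /= in_itv /= andbT => x0.
by rewrite mulr_ge0 ?H ?weight_ge0.
Qed.

Lemma Phi_mono t s (f : {poly R}) : t <= s ->
  (forall x, 0 <= x -> 0 <= f.[x]) -> Phi s f <= Phi t f.
Proof.
move=> ts H; apply: le_Rintegral; first exact: measurable_itv.
- exact: int_Phi.
- exact: int_Phi.
move=> x; rewrite /DD /= in_itv /= andbT => x0.
rewrite ler_wpM2l ?H // !weightE ler_wpM2l ?gg_ge0 // lerD2l ler_wpM2l ?(ltW hB) //.
rewrite /heaviside !subr_gt0; case: ifP => sx; case: ifP => tx //.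
by rewrite (le_lt_trans ts sx) in tx.
Qed.



Definition pg (f : {poly R}) (x : R) : R := f.[x] * gg x.

Lemma meas_pg f : measurable_fun [set: R] (pg f).
Proof.
apply: measurable_funM; first exact: meas_horner.
apply: measurable_funM; first exact: measurable_powR.
apply: continuous_measurable_fun => y.
apply: (@continuous_comp _ _ _ (fun x : R => - x) expR); last exact: continuous_expR.
exact: opp_continuous.
Qed.

Lemma bnd_of (D : set R) (h : R -> R) (K : R) :
  (forall x, D x -> `|h x| <= K) -> [bounded h x | x in D].
Proof.
move=> H; rewrite /bounded_near; exists K; split; first exact: num_real.
by move=> K' KK' x Dx /=; apply: le_trans (H x Dx) (ltW KK').
Qed.

Lemma key a b f c M : 0 <= a -> a <= b ->
  (forall x, a < x -> x <= b -> `|pg f x - c| <= M) ->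
  `|Phi a f - Phi b f - B * (b - a) * c| <= B * (b - a) * M.
Proof.
move=> a0 ab HM.
case: (eqVneq a b) => [<-|nab].
  by rewrite !subrr !mulr0 !mul0r subrr normr0.
have ltab : a < b by rewrite lt_neqAle nab ab.
have M0 : 0 <= M by apply: le_trans (HM b ltab (lexx b)).
set I : set R := `]a, b]%classic.
have mI : measurable I by exact: measurable_itv.
have IDD : I `<=` DD.
  move=> x; rewrite /I /DD /= !in_itv /= andbT => /andP[ax _].
  exact: le_trans a0 (ltW ax).
have muI : mu I = (b - a)%:E.
  by rewrite lebesgue_measure_itv /= lte_fin ltab -EFinD.
have mufin : (mu I < +oo)%E by rewrite muI ltry.
have HI : forall x, I x -> `|pg f x - c| <= M.
  by move=> x; rewrite /I /= in_itv /= => /andP[ax xb]; exact: HM.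
have int1 : mu.-integrable I (EFin \o (fun x => B * pg f x)).
  apply: measurable_bounded_integrable => //.
    by apply: measurable_funTS; apply: measurable_funM => //; exact: meas_pg.
  apply: (@bnd_of _ _ (B * (`|c| + M))) => x Ix.
  rewrite normrM (gtr0_norm hB) ler_pM2l //.
  have := HI x Ix; move: (pg f x) => u Hu.
  have : `|u| <= `|u - c| + `|c|.
    by rewrite -[X in `|X|](subrK c u); exact: ler_normD.
  move=> H1; apply: le_trans H1 _; rewrite addrC lerD2l //.
have int2 : mu.-integrable I (EFin \o (fun x : R => B * c)).
  apply: measurable_bounded_integrable => //.
  by apply: (@bnd_of _ _ `|B * c|) => x Ix.
have int3 : mu.-integrable I (EFin \o (fun x => B * pg f x - B * c)).
  apply: measurable_bounded_integrable => //.
    apply: measurable_funTS; apply: measurable_funB => //.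
    by apply: measurable_funM => //; exact: meas_pg.
  apply: (@bnd_of _ _ (B * M)) => x Ix.
  by rewrite -mulrBr normrM (gtr0_norm hB) ler_pM2l // HI.
have int4 : mu.-integrable I (EFin \o (fun x => `|B * pg f x - B * c|)).
  exact: integrable_norm.
have int5 : mu.-integrable I (EFin \o (fun x : R => B * M)).
  apply: measurable_bounded_integrable => //.
  by apply: (@bnd_of _ _ `|B * M|) => x Ix.
have S1 : Phi a f - Phi b f = \int[mu]_(x in I) (B * pg f x).
  rewrite /Phi -RintegralB; first last.
  - exact: int_Phi.
  - exact: int_Phi.
  - exact: measurable_itv.
  transitivity (\int[mu]_(x in DD) ((fun x => B * pg f x) \_ I) x); last first.
    by rewrite -Rintegral_mkcondr setIidr.
  apply: eq_Rintegral => x; rewrite inE /DD /= in_itv /= andbT => x0.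
  rewrite patchE /I mem_setE in_itv /= !weightE /pg /heaviside !subr_gt0.
  have [ax|xa] := ltP a x; have [bx|xb] := ltP b x => /=.
  - by rewrite subrr.
  - by move: (f.[x]) (gg x) => u v; ring.
  - by have := le_lt_trans ab bx; rewrite ltNge xa.
  - by rewrite subrr.
have S2 : B * (b - a) * c = \int[mu]_(x in I) (B * c).
  rewrite Rintegral_cst //; set m := fine _.
  have -> : m = b - a by rewrite /m; exact: (congr1 fine muI).
  by rewrite mulrAC.
rewrite S1 S2 -RintegralB //.
apply: le_trans (le_normr_Rintegral _ _) _ => //.
apply: le_trans (@le_Rintegral _ _ _ mu I _ (fun=> B * M) _ _ _ _) _ => //.
  by move=> x Ix; rewrite -mulrBr normrM (gtr0_norm hB) ler_pM2l // HI.
rewrite Rintegral_cst //; set m := fine _.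
have -> : m = b - a by rewrite /m; exact: (congr1 fine muI).
by rewrite mulrAC.
Qed.



Lemma key_sym t s f c M : 0 <= t -> 0 <= s ->
  (forall x, `|x - t| <= `|s - t| -> `|pg f x - c| <= M) ->
  `|Phi t f - Phi s f - B * (s - t) * c| <= B * `|s - t| * M.
Proof.
move=> t0 s0 HM; case: (leP t s) => ts.
  rewrite [`|s - t|]ger0_norm ?subr_ge0 //; apply: key => // x tx xs; apply: HM.
  by rewrite !ger0_norm ?subr_ge0 // ?lerD2r // ltW.
have := @key s t f c M s0 (ltW ts).
have H : forall x, s < x -> x <= t -> `|pg f x - c| <= M.
  move=> x sx xt; apply: HM.
  by rewrite !ler0_norm ?subr_le0 // ?lerN2 ?lerD2r // ltW.
move/(_ H) => H2.
rewrite [`|s - t|]ler0_norm ?subr_le0 ?(ltW ts) //.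
rewrite -normrN (_ : - (Phi t f - Phi s f - B * (s - t) * c) =
  Phi s f - Phi t f - B * (t - s) * c); last by ring.
by rewrite (_ : - (s - t) = t - s); last by ring.
Qed.

Lemma pg_cont f x0 : 0 < x0 -> {for x0, continuous (pg f)}.
Proof.
move=> x00.
apply: (@continuousM R R (fun x => f.[x]) gg x0); first exact: continuous_horner.
apply: (@continuousM R R (fun x => x `^ alpha) (fun x => expR (- x)) x0).
  apply: differentiable_continuous; apply/derivable1_diffP.
  by apply: derivable_powR; rewrite in_itv /= andbT.
apply: (@continuous_comp _ _ _ (fun x : R => - x) expR); last exact: continuous_expR.
exact: opp_continuous.
Qed.

Lemma cont_eps (F : R -> R) x0 : {for x0, continuous F} ->
  forall e, 0 < e -> exists2 d, 0 < d & forall x, `|x - x0| < d -> `|F x - F x0| < e.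
Proof.
move=> cF e e0.
have H0 := (cvgrPdist_lt _ _).1 cF e e0.
have [d /= d0 H] := (nbhs_ballP _ _).1 (H0 _).
exists d => // x xd.
rewrite distrC; apply: (H x).
by rewrite -ball_normE /= distrC.
Qed.



Lemma deriv_eps (f : R -> R) t l :
  (forall e, 0 < e -> exists2 d, 0 < d &
     forall s, `|s - t| < d -> `|f s - f t - (s - t) * l| <= e * `|s - t|) ->
  is_derive t 1 f l.
Proof.
move=> H.
have C : (fun h : R => h^-1 *: ((f \o shift t) (h *: 1) - f t)) @ 0^' --> l.
  apply/cvgrPdist_le => e e0.
  have [d d0 Hd] := H e e0.
  near=> h.
  have hd : `|h| < d by near: h; exact: dnbhs0_lt.
  have h0 : h != 0 by near: h; exact: nbhs_dnbhs_neq.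
  have := Hd (h + t); rewrite addrK => /(_ hd) Hh.
  rewrite /= (_ : h%:A = h); last by rewrite /GRing.scale /= mulr1.
  rewrite (_ : h^-1 *: (f (h + t) - f t) = h^-1 * (f (h + t) - f t)) //.
  have hn : 0 < `|h| by rewrite normr_gt0.
  rewrite {1}(_ : l = h^-1 * (h * l)); last by rewrite mulrA mulVf // mul1r.
  rewrite -mulrBr normrM normfV ler_pdivrMl //.
  by rewrite distrC (mulrC `|h|).
have df : derivable f t 1 by apply/cvg_ex; exists l.
apply: DeriveDef => //.
exact: cvg_lim.
Unshelve. all: end_near.
Qed.



Lemma coef_le_sum (p : {poly R}) n i : (size p <= n)%N ->
  `|p`_i| <= \sum_(j < n) `|p`_j|.
Proof.
move=> sp; case: (ltnP i n) => [lt|ge].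
  rewrite (bigD1 (Ordinal lt)) //= lerDl.
  by apply: sumr_ge0 => j _; exact: normr_ge0.
rewrite nth_default ?normr0; last exact: leq_trans sp ge.
by apply: sumr_ge0 => j _; exact: normr_ge0.
Qed.

Lemma sum_coef_ge0 (p : {poly R}) n : 0 <= \sum_(j < n) `|p`_j|.
Proof. by apply: sumr_ge0 => j _; exact: normr_ge0. Qed.

Lemma pow_mono (X : R) i n : 1 <= X -> (i <= n)%N -> X ^+ i <= X ^+ n.
Proof.
move=> X1 le.
rewrite -(subnKC le) exprD -{1}[X ^+ i]mulr1 ler_wpM2l ?exprn_ge0 ?exprn_ege1 //.
  exact: le_trans ler01 X1.
Qed.

Lemma horner_bound (q : {poly R}) n x X beta : (size q <= n)%N ->
  (forall i, `|q`_i| <= beta) -> `|x| <= X -> 1 <= X ->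
  `|q.[x]| <= beta * n%:R * X ^+ n.
Proof.
move=> sq hb xX X1.
have b0 : 0 <= beta by apply: le_trans (hb 0%N); exact: normr_ge0.
rewrite (horner_coef_wide _ sq).
apply: le_trans (ler_norm_sum _ _ _) _.
apply: le_trans (_ : \sum_(i < n) (beta * X ^+ n) <= _).
  apply: ler_sum => i _; rewrite normrM normrX.
  apply: ler_pM; [exact: normr_ge0 | exact: exprn_ge0 | exact: hb | ].
  apply: le_trans (_ : X ^+ i <= _); last exact: pow_mono (ltnW (ltn_ord i)).
  by apply: lerXn2r; rewrite ?nnegrE // (le_trans (normr_ge0 x)).
rewrite sumr_const card_ord.
suff -> : beta * X ^+ n *+ n = beta * n%:R * X ^+ n by [].
by rewrite -mulr_natr; ring.
Qed.

Lemma size_sub_lead (q p : {poly R}) d : (size q <= d.+1)%N -> p \is monic ->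
  size p = d.+1 -> (size (q - q`_d *: p)%R <= d)%N.
Proof.
move=> sq mp sp; apply/leq_sizeP => j dj.
rewrite coefB coefZ.
case: (ltngtP d j) dj => // [lt|<-] _.
  rewrite (nth_default _ (leq_trans sq lt)).
  by rewrite (nth_default _ (_ : size p <= j)%N) ?sp // mulr0 subr0.
have : lead_coef p = 1 by apply/monicP.
by rewrite lead_coefE sp /= => ->; rewrite mulr1 subrr.
Qed.



Variable P : nat -> R -> {poly R}.
Hypothesis hP : forall n t, 0 < t -> P n t \is monic /\ size (P n t) = n.+1.
Hypothesis hO : forall n m t, 0 < t -> (m < n)%N ->
  ip alpha A B t (P n t) (P m t) = 0.

Lemma orth t n m : 0 < t -> (m < n)%N -> Phi t (P m t * P n t) = 0.
Proof. by move=> t0 mn; rewrite mulrC -ipE hO. Qed.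

Lemma orth_low t m (q : {poly R}) : 0 < t -> (size q <= m)%N ->
  Phi t (q * P m t) = 0.
Proof.
move=> t0.
suff H : forall d (q : {poly R}), (size q <= d)%N -> (d <= m)%N -> Phi t (q * P m t) = 0.
  by move=> sq; exact: H sq (leqnn m).
elim=> [|d IH] {}q sq dm.
  move: sq; rewrite leqn0 size_poly_eq0 => /eqP ->.
  by rewrite mul0r Phi0.
have [mon sz] := hP d t t0.
have E : q * P m t = q`_d *: (P d t * P m t) + (q - q`_d *: P d t) * P m t.
  by rewrite scalerAl -mulrDl addrC subrK.
rewrite E PhiD PhiZ orth // mulr0 add0r.
apply: IH; last exact: ltnW.
exact: size_sub_lead.
Qed.

Lemma hpos t k : 0 < t -> 0 < Phi t (P k t * P k t).
Proof.
move=> t0; set p := P k t.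
have [mon sz] := hP k t t0.
have pn0 : p != 0 by apply: monic_neq0.
have [x0 [tx0 px0]] : exists x0, t < x0 /\ p.[x0] != 0.
  apply: contrapT => H.
  have H' : forall x, t < x -> root p x.
    move=> x tx; apply/negPn/negP => nr; apply: H; exists x; split => //.
  set rs := [seq t + i.+1%:R | i <- iota 0 (size p)].
  have Hall : all (root p) rs.
    by apply/allP => y /mapP [i _ ->]; apply: H'; rewrite ltrDl ltr0n.
  have Hu : uniq rs.
    rewrite map_inj_uniq ?iota_uniq // => i j /addrI /eqP.
    by rewrite eqr_nat eqSS => /eqP.
  have := max_poly_roots pn0 Hall Hu.
  by rewrite size_map size_iota ltnn.
have x00 : 0 < x0 by exact: lt_trans t0 tx0.
set c := pg (p * p) x0.
have c0 : 0 < c.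
  rewrite /c /pg hornerM mulr_gt0 //; last first.
    by rewrite /gg mulr_gt0 ?powR_gt0 ?expR_gt0.
  by rewrite -expr2 exprn_even_gt0.
have [d d0 Hd] := cont_eps (pg (p * p)) x0 (pg_cont (p * p) x0 x00) (c / 2) (divr_gt0 c0 (ltr0Sn _ 1)).
set b := x0 + d / 2.
have x0b : x0 <= b by rewrite /b lerDl divr_ge0 // ltW.
have HK := @key x0 b (p * p) c (c / 2) (ltW x00) x0b.
have : `|Phi x0 (p * p) - Phi b (p * p) - B * (b - x0) * c| <= B * (b - x0) * (c / 2).
  apply: HK => x x0x xb; apply: ltW; apply: Hd.
  rewrite ger0_norm ?subr_ge0 ?(ltW x0x) //.
  apply: le_lt_trans (_ : b - x0 < d); first by rewrite lerD2r.
  by rewrite /b addrAC subrr add0r ltr_pdivrMr // ltr_pMr // ltr1n.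
have nn : forall x, 0 <= x -> 0 <= (p * p).[x] by move=> x _; rewrite hornerM -expr2 sqr_ge0.
have Pb := Phi_ge0 b (p * p) nn.
have Pm := Phi_mono t x0 (p * p) (ltW tx0) nn.
have bx : 0 < b - x0 by rewrite /b addrAC subrr add0r divr_gt0.
have pos : 0 < B * (b - x0) * c := mulr_gt0 (mulr_gt0 hB bx) c0.
rewrite ler_norml => /andP[H1 _].
lra.
Qed.

Lemma coef_bound t m : 0 < t -> exists K, 0 <= K /\ forall q : {poly R},
  (size q <= m)%N -> forall E, 0 <= E ->
  (forall k, (k < m)%N -> `|Phi t (q * P k t)| <= E) ->
  forall i, `|q`_i| <= K * E.
Proof.
move=> t0; elim: m => [|m [K [K0 HK]]].
  exists 0; split => // q; rewrite leqn0 size_poly_eq0 => /eqP -> E _ _ i.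
  by rewrite coef0 normr0 mul0r.
set p := P m t; have [mon sz] := hP m t t0.
set h := Phi t (p * p); have h0 : 0 < h := hpos t m t0.
set bp := \sum_(j < m.+1) `|p`_j|.
have bp0 : 0 <= bp := sum_coef_ge0 p m.+1.
exists (bp / h + K); split; first by rewrite addr_ge0 // divr_ge0 // ltW.
move=> q sq E E0 HE i.
set c := q`_m; set r := q - c *: p.
have sr : (size r <= m)%N by exact: size_sub_lead.
have Eq : q = c *: p + r by rewrite /r addrC subrK.
have Pqp : Phi t (q * p) = c * h.
  by rewrite {1}Eq mulrDl PhiD -scalerAl PhiZ (orth_low t m r) // addr0.
have hc : `|c| <= E / h.
  rewrite ler_pdivlMr // -(gtr0_norm h0) -normrM -Pqp; exact: HE.
have Hr : forall k, (k < m)%N -> `|Phi t (r * P k t)| <= E.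
  move=> k km; rewrite /r mulrBl PhiB -scalerAl PhiZ.
  rewrite (_ : Phi t (p * P k t) = 0) ?mulr0 ?subr0; first exact: HE (ltnW km).
  by rewrite mulrC orth.
have Hri := HK r sr E E0 Hr i.
have hpi : `|p`_i| <= bp by apply: coef_le_sum; rewrite sz.
rewrite Eq coefD coefZ.
apply: le_trans (ler_normD _ _) _.
rewrite normrM mulrDl.
apply: lerD => //.
apply: le_trans (ler_pM (normr_ge0 _) (normr_ge0 _) hc hpi) _.
by have -> : E / h * bp = bp / h * E by ring.
Qed.



Lemma sizeQ n s t : 0 < s -> 0 < t -> (size (P n s - P n t)%R <= n)%N.
Proof.
move=> s0 t0; have [ms ss] := hP n s s0; have [mt st] := hP n t t0.
have := size_sub_lead (P n s) (P n t) n _ mt st.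
rewrite ss => /(_ (leqnn _)).
have -> : (P n s)`_n = 1.
  by have := monicP ms; rewrite lead_coefE ss.
by rewrite scale1r.
Qed.

Lemma sum_le_sum2 (F : nat -> nat -> R) n k : (k < n)%N ->
  (forall a b, 0 <= F a b) ->
  \sum_(j < n) F k j <= \sum_(a < n) \sum_(j < n) F a j.
Proof.
move=> kn F0; rewrite [X in _ <= X](bigD1 (Ordinal kn)) //= lerDl.
by apply: sumr_ge0 => a _; apply: sumr_ge0 => j _.
Qed.

Lemma gg_pg1 x : pg 1 x = gg x.
Proof. by rewrite /pg hornerC mul1r. Qed.

Lemma Qbound t n : 0 < t -> exists L, 0 <= L /\ exists2 d0, 0 < d0 &
  forall s, `|s - t| < d0 ->
    \sum_(i < n.+1) `|(P n s - P n t)`_i| <= L * `|s - t|.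
Proof.
move=> t0.
have [K [K0 HK]] := coef_bound t n t0.
set X := 2 * t + 1.
have X1 : 1 <= X by rewrite /X lerDr mulr_ge0 // ltW.
have [dg dg0 Hdg] := cont_eps (pg 1) t (pg_cont 1 t t0) 1 ltr01.
set G := gg t + 1.
have HG : forall x, `|x - t| < dg -> gg x <= G.
  move=> x xt; have := Hdg x xt; rewrite !gg_pg1 => H.
  have := ler_norm (gg x - gg t); rewrite /G => H2; lra.
set BS := \sum_(k < n) \sum_(j < n) `|(P k t)`_j|.
have BS0 : 0 <= BS by apply: sumr_ge0 => k _; exact: sum_coef_ge0.
set V := n.+1%:R * X ^+ n.+1.
have V0 : 0 <= V by rewrite mulr_ge0 ?exprn_ge0 // (le_trans ler01 X1).
set W := BS * n%:R * X ^+ n * G.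
have G0 : 0 <= G by rewrite /G addr_ge0 ?gg_ge0.
have W0 : 0 <= W by rewrite !mulr_ge0 ?exprn_ge0 // (le_trans ler01 X1).
set bn := \sum_(i < n.+1) `|(P n t)`_i|.
have bn0 : 0 <= bn := sum_coef_ge0 _ _.
set C1 := n.+1%:R * K * B * V * W.
have B0 : 0 <= B := ltW hB.
have C10 : 0 <= C1.
  by rewrite /C1; do 4 (apply: mulr_ge0 => //).
exists (2 * C1 * bn); split; first by do 2 (apply: mulr_ge0 => //).
set d0 := Num.min (t / 2) (Num.min dg (2 * (C1 + 1))^-1).
have d00 : 0 < d0.
  rewrite /d0 !lt_min divr_gt0 //= dg0 /= invr_gt0 mulr_gt0 //.
  by rewrite ltr_wpDl.
exists d0 => // s std.
move: std; rewrite /d0 !lt_min => /and3P[st1 st2 st3].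
have s0 : 0 < s.
  have := ler_norm (s - t); rewrite distrC => H; move: (ler_norm (t - s)) => H'.
  have : `|s - t| = `|t - s| by rewrite distrC.
  move: st1; rewrite ltr_pdivlMr //; move=> st1 E.
  rewrite -subr_gt0; have : t - s <= `|s - t| by rewrite E ler_norm.
  lra.
set Q := P n s - P n t.
have sQ : (size Q <= n)%N by exact: sizeQ.
set beta := \sum_(i < n.+1) `|Q`_i|.
have beta0 : 0 <= beta := sum_coef_ge0 _ _.
have hQi : forall i, `|Q`_i| <= beta by move=> i; apply: coef_le_sum; exact: leqW.
have Hx : forall x, `|x - t| <= `|s - t| -> `|x| <= X /\ gg x <= G.
  move=> x xt; split; last by apply: HG; exact: le_lt_trans xt st2.
  have : `|x - t| < t / 2 by exact: le_lt_trans xt st1.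
  rewrite ltr_norml => /andP[h1 h2].
  have t2 : 0 < t / 2 by rewrite divr_gt0.
  rewrite ger0_norm; rewrite /X; lra.
have HPk : forall k x, (k < n)%N -> `|x - t| <= `|s - t| -> `|pg (P k t) x| <= W.
  move=> k x kn xt; have [xX gx] := Hx x xt.
  have [_ skt] := hP k t t0.
  rewrite /pg normrM (ger0_norm (gg_ge0 x)) /W.
  apply: ler_pM; [exact: normr_ge0 | exact: gg_ge0 | | exact: gx].
  apply: le_trans (horner_bound (P k t) n x X (\sum_(j < n) `|(P k t)`_j|) _ _ xX X1) _.
  - by rewrite skt.
  - by move=> i; apply: coef_le_sum; rewrite skt.
  rewrite ler_wpM2r ?exprn_ge0 ?(le_trans ler01 X1) // ler_wpM2r //.
  exact: (sum_le_sum2 (fun a j => `|(P a t)`_j|)).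
have HPn : forall x, `|x - t| <= `|s - t| -> `|(P n s).[x]| <= (bn + beta) * V.
  move=> x xt; have [xX _] := Hx x xt.
  have [_ snt] := hP n t t0.
  have -> : P n s = P n t + Q by rewrite /Q addrC subrK.
  rewrite hornerD mulrDl; apply: le_trans (ler_normD _ _) _.
  apply: lerD.
    rewrite /V mulrA; apply: horner_bound => //; first by rewrite snt.
    by move=> i; apply: coef_le_sum; rewrite snt.
  by rewrite /V mulrA; apply: horner_bound => //; exact: leqW.
set E := B * `|s - t| * ((bn + beta) * V * W).
have E0 : 0 <= E.
  exact: mulr_ge0 (mulr_ge0 B0 (normr_ge0 _)) (mulr_ge0 (mulr_ge0 (addr_ge0 bn0 beta0) V0) W0).
have HE : forall k, (k < n)%N -> `|Phi t (Q * P k t)| <= E.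
  move=> k kn.
  have [_ skt] := hP k t t0.
  rewrite /Q mulrBl PhiB (_ : Phi t (P n t * P k t) = 0); last by rewrite mulrC orth.
  rewrite subr0 -[Phi t _]subr0.
  rewrite -[X in _ - X](_ : Phi s (P n s * P k t) = 0); last first.
    by rewrite mulrC (orth_low s n) // skt.
  have := key_sym t s (P n s * P k t) 0 ((bn + beta) * V * W) (ltW t0) (ltW s0).
  rewrite mulr0 subr0 => H; apply: le_trans (H _) _.
    move=> x xt; rewrite subr0 /pg hornerM -[_ * _ * gg x]mulrA normrM.
    apply: ler_pM; [exact: normr_ge0 | exact: normr_ge0 | exact: HPn | exact: HPk].
  by rewrite /E.
have Hb : beta <= n.+1%:R * (K * E).
  apply: le_trans (_ : \sum_(i < n.+1) (K * E) <= _).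
    by apply: ler_sum => i _; exact: HK.
  by rewrite sumr_const card_ord mulr_natl.
have Hb2 : beta <= C1 * `|s - t| * (bn + beta).
  apply: le_trans Hb _.
  by have -> : n.+1%:R * (K * E) = C1 * `|s - t| * (bn + beta) by rewrite /E /C1; ring.
have u0 : 0 <= `|s - t| := normr_ge0 _.
have y1 : 2 * (C1 * `|s - t|) <= 1.
  have h2 : 0 < 2 * (C1 + 1) by rewrite mulr_gt0 // ltr_wpDl.
  move: st3; rewrite -(div1r (2 * (C1 + 1))) ltr_pdivlMr // => st3.
  nra.
move: Hb2 y1; set y := C1 * `|s - t| => Hb2 y1.
have y0 : 0 <= y by rewrite /y mulr_ge0.
have -> : 2 * C1 * bn * `|s - t| = 2 * y * bn by rewrite /y; ring.
nra.
Qed.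



Lemma main n (t : R) : (1 <= n)%N -> 0 < t -> is_derive t 1 (p1 P n) (rn alpha A B P n t).
Proof.
move=> n1 t0.
set p' := P n.-1 t; set Pn := P n t.
have [monp' szp'] := hP n.-1 t t0.
have [monPn szPn] := hP n t t0.
have nE : n.-1.+1 = n by rewrite prednK.
set h := Phi t (p' * p'); have h0 : 0 < h := hpos t n.-1 t0.
set c := pg (Pn * p') t.
have lE : rn alpha A B P n t = B * c / h.
  rewrite /rn /hnorm ipE -/p' -/Pn -/h /c /pg hornerM /gg; ring.
rewrite lE; apply: deriv_eps => e e0.
have B0 : 0 <= B := ltW hB.
set e' := e * h / B.
have e'0 : 0 < e' by rewrite /e' divr_gt0 // mulr_gt0.
have [L [L0 [d0 d00 HQ]]] := Qbound t n t0.
set X := 2 * t + 1.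
have X1 : 1 <= X by rewrite /X lerDr mulr_ge0 // ltW.
set V := n.+1%:R * X ^+ n.+1.
have V0 : 0 <= V by rewrite mulr_ge0 ?exprn_ge0 // (le_trans ler01 X1).
have [d1 d10 H1] := cont_eps (pg p') t (pg_cont p' t t0) 1 ltr01.
set G := `|pg p' t| + 1.
have G0 : 0 <= G by rewrite addr_ge0.
have e2 : 0 < e' / 2 by rewrite divr_gt0.
have [d2 d20 H2] := cont_eps (pg (Pn * p')) t (pg_cont (Pn * p') t t0) (e' / 2) e2.
set LVG := L * V * G.
have LVG0 : 0 <= LVG by rewrite /LVG mulr_ge0 // mulr_ge0.
set d3 := (e' / 2) / (LVG + 1).
have d30 : 0 < d3 by rewrite /d3 divr_gt0 // ltr_wpDl.
exists (Num.min (t / 2) (Num.min d0 (Num.min d1 (Num.min d2 d3)))).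
  by rewrite !lt_min divr_gt0 //= d00 d10 d20 d30.
move=> s; rewrite !lt_min => /and5P[st1 st2 st3 st4 st5].
have u0 : 0 <= `|s - t| := normr_ge0 _.
have s0 : 0 < s.
  move: st1; rewrite ltr_pdivlMr // => st1.
  have : t - s <= `|s - t| by rewrite distrC ler_norm.
  lra.
set Q := P n s - Pn.
have sQ : (size Q <= n)%N by exact: sizeQ.
set beta := \sum_(i < n.+1) `|Q`_i|.
have hQi : forall i, `|Q`_i| <= beta by move=> i; apply: coef_le_sum; exact: leqW.
have hbeta : beta <= L * `|s - t| := HQ s st2.
have Hc : Phi t (Q * p') = Q`_n.-1 * h.
  set r := Q - Q`_n.-1 *: p'.
  have sr : (size r <= n.-1)%N by apply: size_sub_lead => //; rewrite nE.
  have E : Q * p' = Q`_n.-1 *: (p' * p') + r * p'.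
    by rewrite scalerAl -mulrDl /r addrC subrK.
  by rewrite E PhiD PhiZ (orth_low t n.-1 r) // addr0.
set F := P n s * p'.
have HD : Phi t (Q * p') = Phi t F - Phi s F.
  rewrite /Q mulrBl PhiB (_ : Phi t (Pn * p') = 0); last first.
    by rewrite mulrC /Pn /p' orth // prednK.
  rewrite (_ : Phi s F = 0) //.
  by rewrite /F mulrC (orth_low s n) // szp' nE.
have HM : forall x, `|x - t| <= `|s - t| -> `|pg F x - c| <= e'.
  move=> x xt.
  have xt1 : `|x - t| < d1 by exact: le_lt_trans xt st3.
  have xt2 : `|x - t| < d2 by exact: le_lt_trans xt st4.
  have xX : `|x| <= X.
    have : `|x - t| < t / 2 by exact: le_lt_trans xt st1.
    rewrite ltr_norml => /andP[h1 h2].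
    have t2 : 0 < t / 2 by rewrite divr_gt0.
    rewrite ger0_norm; rewrite /X; lra.
  have Ex : pg F x - c = (pg (Pn * p') x - c) + Q.[x] * pg p' x.
    rewrite /pg /F /Q !hornerM hornerD hornerN; ring.
  rewrite Ex; apply: le_trans (ler_normD _ _) _.
  have A1 : `|pg (Pn * p') x - c| <= e' / 2.
    by apply: ltW; apply: H2.
  have A2 : `|Q.[x]| <= beta * V.
    by rewrite /V mulrA; apply: horner_bound => //; exact: leqW.
  have A3 : `|pg p' x| <= G.
    have := H1 x xt1; rewrite /G => H.
    have := ler_normD (pg p' x - pg p' t) (pg p' t); rewrite subrK => H'.
    lra.
  have A4 : `|Q.[x] * pg p' x| <= L * `|s - t| * V * G.
    rewrite normrM; apply: ler_pM; [exact: normr_ge0 | exact: normr_ge0 | | exact: A3].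
    by apply: le_trans A2 _; rewrite ler_wpM2r.
  have A5 : L * `|s - t| * V * G <= e' / 2.
    move: st5; rewrite /d3 ltr_pdivlMr ?ltr_wpDl // => st5.
    have : LVG * `|s - t| <= `|s - t| * (LVG + 1) by nra.
    move=> H; have -> : L * `|s - t| * V * G = LVG * `|s - t| by rewrite /LVG; ring.
    lra.
  have := lerD A1 (le_trans A4 A5); rewrite -splitr => H.
  exact: H.
have K := key_sym t s F c e' (ltW t0) (ltW s0) HM.
have EQ : p1 P n s - p1 P n t - (s - t) * (B * c / h) =
    (Phi t F - Phi s F - B * (s - t) * c) / h.
  have hn0 : h != 0 by rewrite gt_eqF.
  have -> : p1 P n s - p1 P n t = Q`_n.-1 by rewrite /p1 /Q coefB.
  have -> : Q`_n.-1 = (Phi t F - Phi s F) / h by rewrite -HD Hc mulfK.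
  by field.
rewrite EQ normrM (gtr0_norm (_ : 0 < h^-1)) ?invr_gt0 // ler_pdivrMr //.
apply: le_trans K _.
rewrite /e' (_ : B * `|s - t| * (e * h / B) = e * `|s - t| * h) //.
by field; rewrite gt_eqF.
Qed.

End Analysis.

Close Scope classical_set_scope.

Theorem lemma9 (R : realType) (alpha A B : R) (P : nat -> R -> {poly R}) :
  0 < alpha -> 0 <= A -> 0 < B ->
  (* P n t is the monic polynomial of degree n ... *)
  (forall (n : nat) (t : R), 0 < t -> P n t \is monic /\ size (P n t) = n.+1) ->
  (* ... and the family is orthogonal on [0,oo) w.r.t. w(., t) *)
  (forall (n m : nat) (t : R), 0 < t -> (m < n)%N ->
     ip alpha A B t (P n t) (P m t) = 0) ->
  forall (n : nat) (t : R), (1 <= n)%N -> 0 < t ->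
    is_derive t 1 (p1 P n) (rn alpha A B P n t).
Proof.
move=> ha hA hB hP hO n t n1 t0.
exact: (@main R alpha A B ha hA hB P hP hO n t n1 t0).
Qed.
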